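(* Let $X=\mathbb{R}^n$ and let $f\colon X\to\mathbb{R}$ be Borel measurable and attain a minimum. Consider the population game $F$ with strategy set $X$ and mean payoff functions $F_\mu(x)=\langle f,\mu\rangle - f(x)$ for $\mu\in\mathcal{P}(X)$. Then a distribution $\mu\in\mathcal{P}(X)$ is a Nash equilibrium of $F$ if and only if $\mu$ is a global minimizer of $\inf_{\nu\in\mathcal{P}(X)}\langle f,\nu\rangle$. Furthermore, $\mu$ is a strict Nash equilibrium of $F$ if and only if $\mu$ is the unique global minimizer of $\inf_{\nu\in\mathcal{P}(X)}\langle f,\nu\rangle$.
   Context: $\mathcal{P}(X)$ denotes the set of Borel probability measures on $X$. For a measure $\mu$ and measurable $h$, $\langle h,\mu\rangle:=\int_X h\,d\mu$, which is allowed to be infinite (since $f$ is bounded below, $\langle f,\mu\rangle\in(-\infty,+\infty]$). A population game with strategy set $X$ assigns to each population state $\mu\in\mathcal{P}(X)$ a payoff function $F_\mu\colon X\to\mathbb{R}$. Equivalently, $F_\mu(x)=\int_X (f(x')-f(x))\,d\mu(x')$. A Nash equilibrium of $F$ is a $\mu\in\mathcal{P}(X)$ with $\langle F_\mu,\nu\rangle\le\langle F_\mu,\mu\rangle$ for all $\nu\in\mathcal{P}(X)$; it is a strict Nash equilibrium if the inequality is strict for all $\nu\neq\mu$. *)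

(* Defs.v *)
From HB Require Import structures.
From mathcomp Require Import all_boot all_order all_algebra.
From mathcomp Require Import all_classical all_reals all_analysis.
Set Implicit Arguments. Unset Strict Implicit. Unset Printing Implicit Defensive.
Import Order.TTheory GRing.Theory Num.Theory.
Import numFieldNormedType.Exports.
Local Open Scope classical_set_scope.
Local Open Scope ring_scope.
Local Open Scope ereal_scope.

(* X = R^n (1 x n row matrices 'M[R]_(1,n) = 'rV[R]_n) equipped with its Borel sigma-algebra
   (generated by the open sets of the product topology). *)
Definition Rn (R : realType) (n : nat) := g_sigma_algebraType (@open 'M[R]_(1, n)).

Section Game.
Context {R : realType} {n : nat}.
Local Notation X := (Rn R n).

Definition pairing (h : X -> R) (mu : probability X R) : \bar R :=
  \int[mu]_x (h x)%:E.

Definition same_measure (mu nu : probability X R) : Prop :=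
  forall A, measurable A -> mu A = nu A.

(* mean payoff F_mu(x) = <f,mu> - f(x) (real valued; only meaningful when <f,mu> < +oo) *)
Definition payoff (f : X -> R) (mu : probability X R) (x : X) : R :=
  (fine (pairing f mu) - f x)%R.

(* Nash equilibrium: F_mu is a genuine real payoff (i.e. <f,mu> finite) and
   <F_mu, nu> <= <F_mu, mu> for all nu *)
Definition nash (f : X -> R) (mu : probability X R) : Prop :=
  pairing f mu < +oo /\
  forall nu : probability X R, pairing (payoff f mu) nu <= pairing (payoff f mu) mu.

Definition strict_nash (f : X -> R) (mu : probability X R) : Prop :=
  pairing f mu < +oo /\
  forall nu : probability X R, ~ same_measure nu mu ->
    pairing (payoff f mu) nu < pairing (payoff f mu) mu.

Definition minimizer (f : X -> R) (mu : probability X R) : Prop :=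
  forall nu : probability X R, pairing f mu <= pairing f nu.

Definition unique_minimizer (f : X -> R) (mu : probability X R) : Prop :=
  minimizer f mu /\ forall nu : probability X R, minimizer f nu -> same_measure nu mu.
End Game.

(* Main.v *)
Require Import Defs.
From HB Require Import structures.
From mathcomp Require Import all_boot all_order all_algebra.
From mathcomp Require Import all_classical all_reals all_analysis.
From mathcomp Require Import measurable_realfun.
Import Order.TTheory GRing.Theory Num.Theory.
Import numFieldNormedType.Exports.
Local Open Scope classical_set_scope.
Local Open Scope ring_scope.

Section Aux.
Local Open Scope ereal_scope.
Context d (T : measurableType d) (R : realType) (P : probability T R).

Lemma nonint_pos (u : T -> \bar R) : measurable_fun setT u ->
  \int[P]_x u^\- x < +oo -> ~ P.-integrable setT u -> \int[P]_x u^\+ x = +oo.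
Proof.
move=> mu hneg hni.
have : ~ (\int[P]_x `|u x| < +oo).
  by move=> h; apply: hni; apply/integrableP; split.
rewrite -[fun x => _]/(abse \o u) fune_abse ge0_integralD //; last 2 first.
- exact: measurable_funepos.
- exact: measurable_funeneg.
move=> H; apply/eqP; rewrite eq_le leey /= leNgt; apply/negP => hp.
by apply: H; rewrite lte_add_pinfty.
Qed.

Lemma nonint_neg (u : T -> \bar R) : measurable_fun setT u ->
  \int[P]_x u^\+ x < +oo -> ~ P.-integrable setT u -> \int[P]_x u^\- x = +oo.
Proof.
move=> mu hpos hni.
have : ~ (\int[P]_x `|u x| < +oo).
  by move=> h; apply: hni; apply/integrableP; split.
rewrite -[fun x => _]/(abse \o u) fune_abse ge0_integralD //; last 2 first.
- exact: measurable_funepos.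
- exact: measurable_funeneg.
move=> H; apply/eqP; rewrite eq_le leey /= leNgt; apply/negP => hp.
by apply: H; rewrite lte_add_pinfty.
Qed.

Lemma int_cst_bound (g : T -> \bar R) (b : R) : measurable_fun setT g ->
  (forall x, 0 <= g x <= b%:E) -> \int[P]_x g x < +oo.
Proof.
move=> mg hg.
have hb : (0 <= b%:E) by case/andP: (hg point) => h1 h2; exact: le_trans h2.
apply: (@le_lt_trans _ _ (\int[P]_x (cst b%:E) x)).
  apply: ge0_le_integral => //.
  - by move=> x _; case/andP: (hg x).
  - by move=> x _; case/andP: (hg x).
rewrite integral_cst //; apply: lte_mul_pinfty => //; first [ by rewrite probability_setT ltry | by rewrite ltey_eq fin_num_measure | by apply: (le_lt_trans (sprobability_setT _)) | by apply: (@le_lt_trans _ _ 1); [apply: probability_le1|]].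
Qed.

Lemma Q_ge (u : T -> R) (a : R) : measurable_fun setT u ->
  (forall x, a <= u x)%R -> ~ P.-integrable setT (EFin \o u) ->
  \int[P]_x (u x)%:E = +oo.
Proof.
move=> mu ha hni.
have mE : measurable_fun setT (EFin \o u) by exact/measurable_EFinP.
have hneg : \int[P]_x (EFin \o u)^\- x < +oo.
  apply: (@int_cst_bound _ `|a|%R); first exact: measurable_funeneg.
  move=> x; rewrite funenegE /= le_max lexx orbT /= ge_max !lee_fin normr_ge0 andbT.
  apply: (@le_trans _ _ (- a)%R); first by rewrite lerN2.
  by rewrite -normrN ler_norm.
rewrite integralE (nonint_pos _ mE hneg hni).
have h0 : 0 <= \int[P]_x (EFin \o u)^\- x by apply: integral_ge0.
by rewrite addye // eqe_oppLR /= lt_eqF.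
Qed.

Lemma Q_le (u : T -> R) (a : R) : measurable_fun setT u ->
  (forall x, u x <= a)%R -> ~ P.-integrable setT (EFin \o u) ->
  \int[P]_x (u x)%:E = -oo.
Proof.
move=> mu ha hni.
have mE : measurable_fun setT (EFin \o u) by exact/measurable_EFinP.
have hpos : \int[P]_x (EFin \o u)^\+ x < +oo.
  apply: (@int_cst_bound _ `|a|%R); first exact: measurable_funepos.
  move=> x; rewrite funeposE /= le_max lexx orbT /= ge_max !lee_fin normr_ge0 andbT.
  exact: (le_trans (ha x) (ler_norm a)).
rewrite integralE (nonint_neg _ mE hpos hni).
have h0 : 0 <= \int[P]_x (EFin \o u)^\+ x by apply: integral_ge0.
by rewrite addeNy.
Qed.

Lemma Kint (u : T -> R) (m c : R) : measurable_fun setT u ->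
  (forall x, m <= u x)%R ->
  \int[P]_x (c - u x)%:E = c%:E - \int[P]_x (u x)%:E.
Proof.
move=> mu hm.
have ic : P.-integrable setT (EFin \o cst c).
  exact: finite_measure_integrable_cst.
have [iu|niu] := pselect (P.-integrable setT (EFin \o u)).
  under eq_integral do rewrite EFinB.
  have H := @integralB_EFin _ _ _ P setT (fun=> c) u measurableT ic iu.
  apply: (eq_trans H); congr (_ - _).
  have P1 : (P : {measure set T -> \bar R}) setT = 1 := probability_setT P.
  by rewrite integral_cst // P1 mule1.
rewrite (@Q_ge u m mu hm niu) addeNy.
apply: (@Q_le _ (c - m)%R).
- exact: measurable_funB.
- by move=> x; rewrite lerD2l lerN2.
move=> ib; apply: niu.
have -> : EFin \o u = (EFin \o cst c) \- (EFin \o (fun x => c - u x)%R).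
  by apply/funext => x /=; rewrite -EFinB opprB addrC subrK.
exact: integrableB.
Qed.

End Aux.

Theorem proposition1 (R : realType) (n : nat) (f : Rn R n -> R)
    (hf : measurable_fun setT f)
    (hmin : exists x0 : Rn R n, forall x : Rn R n, f x0 <= f x)
    (mu : probability (Rn R n) R) :
  (nash f mu <-> minimizer f mu) /\
  (strict_nash f mu <-> unique_minimizer f mu).
Proof.
have [x0 hx0] := hmin.
have fin_of : forall nu : probability (Rn R n) R,
    (pairing f nu < +oo)%E -> pairing f nu \is a fin_num.
  move=> nu hlt; have [i|ni] := pselect (nu.-integrable setT (EFin \o f)).
    exact: integrable_fin_num.
  by move: hlt; rewrite /pairing (@Q_ge _ _ _ nu f (f x0) hf hx0 ni).
have payE : forall nu mu' : probability (Rn R n) R,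
    pairing (payoff f mu') nu = ((fine (pairing f mu'))%:E - pairing f nu)%E.
  by move=> nu mu'; exact: (@Kint _ _ _ nu f (f x0) _ hf hx0).
have key : (pairing f mu < +oo)%E -> forall nu : probability (Rn R n) R,
    pairing (payoff f mu) nu = (pairing f mu - pairing f nu)%E /\
    pairing (payoff f mu) mu = 0%E.
  move=> hlt nu; rewrite !payE fineK ?fin_of //; split => //.
  by rewrite subee ?fin_of.
have dlt : forall mu' : probability (Rn R n) R, minimizer f mu' ->
    (pairing f mu' < +oo)%E.
  move=> mu' hm; apply: (le_lt_trans (hm (\d_x0 : probability _ R))).
  rewrite /pairing integral_dirac //; last exact/measurable_EFinP.
  by rewrite diracT mul1e ltry.
have nash_min : nash f mu <-> minimizer f mu.
  split.
  - move=> [hlt H] nu; have := H nu; rewrite !(key hlt nu).1 (key hlt nu).2.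
    by rewrite sube_le0.
  - move=> hm; have hlt := dlt _ hm; split => // nu.
    by rewrite (key hlt nu).1 (key hlt nu).2 sube_le0.
split => //.
have eqI : forall nu : probability (Rn R n) R, same_measure nu mu ->
    pairing f nu = pairing f mu.
  move=> nu hs; rewrite /pairing; apply: eq_measure_integral => A mA _.
  exact: hs.
split.
- move=> [hlt H].
  have hmin' : minimizer f mu.
    move=> nu; have [hs|hs] := pselect (same_measure nu mu).
      by rewrite (eqI _ hs).
    have := H nu hs; rewrite (key hlt nu).1 (key hlt nu).2.
    rewrite sube_lt0 ?(fin_of _ hlt) //; exact: ltW.
  split => // nu hnu; apply: contrapT => hs.
  have := H nu hs; rewrite (key hlt nu).1 (key hlt nu).2.
  rewrite sube_lt0 ?(fin_of _ hlt) // => hlt2.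
  by have := hnu mu; rewrite leNgt hlt2.
- move=> [hm hu]; have hlt := dlt _ hm; split => // nu hs.
  rewrite (key hlt nu).1 (key hlt nu).2 sube_lt0 ?(fin_of _ hlt) //.
  rewrite ltNge; apply/negP => hle; apply: hs; apply: hu => rho.
  exact: le_trans hle (hm rho).
Qed.
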